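(* Let $p(y)$ be a probability distribution on $\mathcal{Y}$, $p(z\mid y)$ conditional distributions on $\mathcal{Z}$, $\phi:\mathcal{Y}\times\mathcal{Z}\to\Phi\subseteq\mathbb{R}^{D_\phi}$, and let $\gamma(y)=\mathbb{E}_{z\sim p(z\mid y)}[\phi(y,z)]$ be integrable as a function of $y$. For an integrable $f:\mathcal{Y}\times\Phi\to\mathbb{R}^{D_f}$ write $I(f)=\mathbb{E}_{y\sim p(y)}[f(y,\gamma(y))]$. Suppose an inner estimator $\mathcal{I}$ produces, for each $y\in\mathcal{Y}$, a random estimate $\hat\gamma_y\in\Phi$ of $\gamma(y)$ which is not exact, in the sense that for every $y$ the estimate $\hat\gamma_y$ has nonzero variance (so $\gamma(y)$ is not computed exactly). Then there does not exist an outer estimator $\mathcal{J}$ which, for every integrable $f$, maps a sample set $\hat\zeta=\{(y_1,\hat\gamma_{y_1}),\dots,(y_n,\hat\gamma_{y_n})\}$ (with the $\hat\gamma_{y_i}$ generated by $\mathcal{I}$) to an estimate $\psi(\hat\zeta,f)$ such that simultaneously (i) $\mathbb{E}[\psi(\hat\zeta,f)]=I(f)$ for every integrable $f$, and (ii) $\mathbb{E}_{y\sim p(y)}\big[\mathbb{E}[f(y,\hat\gamma_y)\mid y]\big]-\mathbb{E}[\psi(\hat\zeta,f)]\ge0$ for every integrable $f$. The same conclusion holds if the inequality in (ii) is replaced by $\le 0$.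
   Context: Condition (ii) says that combining the inner estimator with an exact outer expectation never yields a negatively (respectively, in the reversed version, positively) biased estimator for any $f$. The conclusion states that no general-purpose nested estimation scheme of this form can be unbiased for all integrable $f$. *)

(* Defs.v *)
From HB Require Import structures.
From mathcomp Require Import all_boot all_order all_algebra.
From mathcomp Require Import all_classical all_reals all_analysis.

Set Implicit Arguments.
Unset Strict Implicit.
Unset Printing Implicit Defensive.
Import Order.TTheory GRing.Theory Num.Theory.
Local Open Scope classical_set_scope.
Local Open Scope ring_scope.

(* Vectors of R^D are represented by D.-tuple R, which carries the product
   (coordinate-generated) sigma-algebra of mathcomp-analysis. *)

Section nested.
Context {R : realType}.
Context {dY dZ : measure_display} {Y : measurableType dY} {Z : measurableType dZ}.
Context {Dphi Df : nat}.

Local Open Scope ereal_scope.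

Definition gamma (pz : R.-pker Y ~> Z) (phi : Y -> Z -> Dphi.-tuple R)
    (y : Y) : Dphi.-tuple R :=
  [tuple fine (\int[pz y]_z (tnth (phi y z) j)%:E) | j < Dphi].

Definition Ival (PY : probability Y R) (g : Y -> Dphi.-tuple R)
    (f : Y -> Dphi.-tuple R -> Df.-tuple R) : Df.-tuple R :=
  [tuple fine (\int[PY]_y (tnth (f y (g y)) j)%:E) | j < Df].

(* j-th component of E_{y ~ p(y)} [ E [ f(y, hat gamma_y) | y ] ],
   where hat gamma_y ~ k y *)
Definition nested_mean (PY : probability Y R)
    (k : R.-pker Y ~> Dphi.-tuple R)
    (f : Y -> Dphi.-tuple R -> Df.-tuple R) (j : 'I_Df) : \bar R :=
  \int[PY]_y (\int[k y]_x (tnth (f y x) j)%:E).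

(* f : Y x Phi -> R^Df is integrable: all the expectations appearing in the
   statement (I(f) and the nested expectation) exist and are finite *)
Definition integrable_f (PY : probability Y R) (g : Y -> Dphi.-tuple R)
    (k : R.-pker Y ~> Dphi.-tuple R)
    (f : Y -> Dphi.-tuple R -> Df.-tuple R) : Prop :=
  forall j : 'I_Df,
    [/\ PY.-integrable setT (fun y => (tnth (f y (g y)) j)%:E),
        (forall y, (k y).-integrable setT (fun x => (tnth (f y x) j)%:E)) &
        PY.-integrable setT (fun y => \int[k y]_x (tnth (f y x) j)%:E)].

End nested.

(* Variance of a real function X under a (probability) measure mu; this is
   literally the library's  'V_mu[X] = 'E[(X - fine 'E[X])^2]  written for a
   measure that is not syntactically of type [probability] (here [k y]). *)
Definition variance_of {R : realType} {d} {T : measurableType d}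
    (mu : {measure set T -> \bar R}) (X : T -> R) : \bar R :=
  (\int[mu]_x ((X x - fine (\int[mu]_t (X t)%:E)) ^+ 2)%:E)%E.

(* The inner estimator k is not exact: for every y, hat gamma_y ~ k y has
   nonzero variance (the covariance matrix is nonzero, i.e. some coordinate
   has nonzero variance). *)
Definition not_exact {R : realType} {dY} {Y : measurableType dY} {D : nat}
    (k : R.-pker Y ~> D.-tuple R) : Prop :=
  forall y : Y, exists j : 'I_D,
    variance_of (k y) (fun x : D.-tuple R => tnth x j) != 0%E.

(* An outer estimator J: a probability space (Omega, P), a sample size n,
   random sample points y_i and inner estimates hat gamma_{y_i} generated by
   the inner estimator k (given y_i, hat gamma_{y_i} ~ k y_i), and an
   estimate psi(zeta, f) computed from the sample set zeta and f.
   [cmp] is the comparison used in condition (ii): (>= 0) or (<= 0). *)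
Definition outer_estimator_exists {R : realType} {dY} {Y : measurableType dY}
    {Dphi Df : nat} (PY : probability Y R) (g : Y -> Dphi.-tuple R)
    (k : R.-pker Y ~> Dphi.-tuple R) (cmp : \bar R -> Prop) : Prop :=
  exists (dO : measure_display) (Omega : measurableType dO)
         (P : probability Omega R) (n : nat)
         (ys : 'I_n -> Omega -> Y) (gs : 'I_n -> Omega -> Dphi.-tuple R)
         (psi : seq (Y * Dphi.-tuple R) ->
                (Y -> Dphi.-tuple R -> Df.-tuple R) -> Df.-tuple R),
    let zeta := fun w : Omega => [seq (ys i w, gs i w) | i <- enum 'I_n] in
    [/\
        (forall i, measurable_fun setT (ys i)),
        (forall i, measurable_fun setT (gs i)),
        (* hat gamma_{y_i} is generated by the inner estimator k *)
        (forall i (A : set Y) (B : set (Dphi.-tuple R)),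
           measurable A -> measurable B ->
           P (ys i @^-1` A `&` gs i @^-1` B) =
           (\int[P]_(w in ys i @^-1` A) k (ys i w) B)%E),
        (forall f, integrable_f PY g k f -> forall j : 'I_Df,
           P.-integrable setT (fun w => (tnth (psi (zeta w) f) j)%:E) /\
           (\int[P]_w (tnth (psi (zeta w) f) j)%:E)%E = (tnth (Ival PY g f) j)%:E) &
        (forall f, integrable_f PY g k f -> forall j : 'I_Df,
           cmp (nested_mean PY k f j - \int[P]_w (tnth (psi (zeta w) f) j)%:E)%E)].

(* Main.v *)
Require Import Defs.
From HB Require Import structures.
From mathcomp Require Import all_boot all_order all_algebra.
From mathcomp Require Import all_classical all_reals all_analysis.
From mathcomp Require Import measurable_realfun.
Import Order.TTheory GRing.Theory Num.Theory.
Local Open Scope classical_set_scope.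
Local Open Scope ring_scope.

Lemma neq_meas {R : realType} {D : nat} (c : D.-tuple R) :
  measurable [set x : D.-tuple R | x != c].
Proof.
have -> : [set x : D.-tuple R | x != c] =
  \bigcup_(j in [set: 'I_D]) ((fun x : D.-tuple R => tnth x j) @^-1` ~` [set tnth c j]).
  apply/seteqP; split => x /=.
    move=> xc; apply: contrapT => H; move/negP: xc; apply.
    apply/eqP/eq_from_tnth => j; apply: contrapT => Hj; apply: H; by exists j.
  move=> [j _ /= H]; apply/eqP => xc; apply: H; by rewrite xc.
apply: fin_bigcup_measurable; first exact: finite_finset.
move=> j _; rewrite -[X in measurable X]setTI.
apply: measurable_tnth => //. apply: measurableC. exact: measurable_set1.
Qed.

Lemma var0 (R : realType) (D : nat) (mu : {measure set D.-tuple R -> \bar R})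
  (c : D.-tuple R) (j : 'I_D) :
  mu setT = 1%E -> mu [set x | x != c] = 0%E ->
  variance_of mu (fun x => tnth x j) = 0%E.
Proof.
move=> mu1 mu0; have mA := neq_meas c.
have ae (f g : D.-tuple R -> R) : measurable_fun setT f -> measurable_fun setT g ->
   (forall x, x = c -> f x = g x) ->
   (\int[mu]_x (f x)%:E = \int[mu]_x (g x)%:E)%E.
  move=> mf mg fg; apply: ae_eq_integral => //.
  - exact/measurable_EFinP.
  - exact/measurable_EFinP.
  rewrite /ae_eq /prop_near1 /nbhs /=. exists [set x | x != c]; split => // x /= H; apply/negP => /eqP xc.
  by apply: H => _; rewrite fg.
have mt : measurable_fun setT (fun x : D.-tuple R => tnth x j) by exact: measurable_tnth.
have E1 : (\int[mu]_x (tnth x j)%:E = (tnth c j)%:E)%E.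
  rewrite (ae _ (cst (tnth c j))) //; last by move=> x ->.
  by rewrite (integral_cst _ _ (tnth c j)%:E) // mu1 mule1.
rewrite /variance_of E1 /=.
rewrite (ae _ (cst 0)) //.
- by rewrite (integral_cst _ _ 0%:E) // mul0e.
- apply: measurable_funX; apply: measurable_funB => //.
- by move=> x ->; rewrite subrr expr0n.
Qed.

Lemma ind_int {d} {T : measurableType d} {R : realType} (mu : {measure set T -> \bar R}) (A : set T) :
  mu setT = 1%E -> measurable A -> mu.-integrable setT (fun x => (\1_A x : R)%:E).
Proof.
move=> mu1 mA; apply/integrableP; split.
  by apply/measurable_EFinP; exact: measurable_indic.
under eq_integral do rewrite gee0_abs ?lee_fin //.
rewrite integral_indic // setIT.
apply: (@le_lt_trans _ _ (mu setT)); last by rewrite mu1 ltry.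
by apply: le_measure; rewrite ?inE.
Qed.

Theorem theorem3 (R : realType) (dY dZ : measure_display)
  (Y : measurableType dY) (Z : measurableType dZ) (Dphi Df : nat)
  (PY : probability Y R) (pz : R.-pker Y ~> Z)
  (phi : Y -> Z -> Dphi.-tuple R)
  (k : R.-pker Y ~> Dphi.-tuple R) :
  (0 < Df)%N ->
  (forall y (j : 'I_Dphi),
     (pz y).-integrable setT (fun z => (tnth (phi y z) j)%:E)) ->
  (forall j : 'I_Dphi,
     PY.-integrable setT (fun y => (tnth (gamma pz phi y) j)%:E)) ->
  not_exact k ->
  ~ @outer_estimator_exists R dY Y Dphi Df PY (gamma pz phi) k
      (fun e => (0 <= e)%E) /\
  ~ @outer_estimator_exists R dY Y Dphi Df PY (gamma pz phi) k
      (fun e => (e <= 0)%E).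
Proof.
move=> Df0 _ _ NE.
set gam := gamma pz phi.
pose A y := [set x : Dphi.-tuple R | x != gam y].
have mA y : measurable (A y) by exact: neq_meas.
have pos y : (0 < k y (A y))%E.
  have [j Hj] := NE y; rewrite lt0e measure_ge0 andbT.
  apply: contra Hj => /eqP H; apply/eqP; apply: var0; [exact: (@prob_kernel _ _ _ _ _ k y)|exact: H].
have fin y : k y (A y) \is a fin_num.
  rewrite ge0_fin_numE ?measure_ge0 //.
  apply: (@le_lt_trans _ _ (k y setT)); last by rewrite prob_kernel ltry.
  by apply: le_measure; rewrite ?inE.
pose e y := fine (k y (A y)).
have eE y : (e y)%:E = k y (A y) by rewrite /e fineK.
have e0 y : e y != 0.
  by rewrite -(@eqe _ (e y) 0) eE gt_eqF.
have key : forall cmp, @outer_estimator_exists R dY Y Dphi Df PY gam k cmp ->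
    forall c : R, cmp c%:E.
  move=> cmp [dO [Om [P [n [ys [gs [psi /= [_ _ _ Hi Hii]]]]]]]] c.
  pose f := fun y (x : Dphi.-tuple R) =>
    [tuple (c / e y * (\1_(A y) x : R)) | _ < Df].
  have tf y x j : tnth (f y x) j = c / e y * (\1_(A y) x : R) by rewrite tnth_mktuple.
  have f0 y j : tnth (f y (gam y)) j = 0.
    by rewrite tf indicE memNset ?mulr0 //= /A /= eqxx.
  have inner y j : (\int[k y]_x (tnth (f y x) j)%:E = c%:E)%E.
    under eq_integral do rewrite tf EFinM.
    rewrite integralZl //; last exact: (ind_int (k y) (A y) (@prob_kernel _ _ _ _ _ k y) (mA y)).
    by rewrite integral_indic // setIT -eE -EFinM divfK.
  have intf : integrable_f PY gam k f.
    move=> j; split.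
    - rewrite (_ : (fun y => _) = EFin \o cst 0); last by apply/funext => y; rewrite /= f0.
      exact: finite_measure_integrable_cst.
    - move=> y; under eq_fun do rewrite tf EFinM.
      exact: integrableZl (ind_int (k y) (A y) (@prob_kernel _ _ _ _ _ k y) (mA y)).
    - rewrite (_ : (fun y => _) = EFin \o cst c); last by apply/funext => y; rewrite /= inner.
      exact: finite_measure_integrable_cst.
  have j0 : 'I_Df := Ordinal Df0.
  have := Hii f intf j0; have [_ ->] := Hi f intf j0.
  rewrite /Ival tnth_mktuple.
  rewrite (_ : (fun y => _) = cst 0%E); last by apply/funext => y; rewrite f0.
  rewrite integral0 /= sube0 /nested_mean.
  rewrite (_ : (fun y => _) = cst c%:E); last by apply/funext => y; rewrite inner.
  rewrite integral_cst //. have P1 : PY [set: Y] = 1%E by exact: probability_setT. move=> H; rewrite -(mule1 c%:E) -P1; exact: H.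
split => H.
- by have := key _ H (-1); rewrite lee_fin ler0N1.
- by have := key _ H 1; rewrite lee_fin ler10.
Qed.
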